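(* Let $\mathcal{A}=\mathcal{R}*_K\mathcal{S}*_L\mathcal{T}\in\mathbb{C}^{I_1\times\cdots\times I_N\times J_1\times\cdots\times J_M}$, where $\mathcal{R}\in\mathbb{C}^{I_1\times\cdots\times I_N\times H_1\times\cdots\times H_K}$, $\mathcal{S}\in\mathbb{C}^{H_1\times\cdots\times H_K\times G_1\times\cdots\times G_L}$ and $\mathcal{T}\in\mathbb{C}^{G_1\times\cdots\times G_L\times J_1\times\cdots\times J_M}$. Then $$\mathcal{A}^{\dagger}=(\mathcal{R}*_K\mathcal{S}*_L\mathcal{T})^{\dagger}=(\mathcal{R}^{\dagger}*_N\mathcal{A})^{\dagger}*_K\mathcal{R}^{\dagger}*_N\mathcal{A}*_M\mathcal{T}^{\dagger}*_L(\mathcal{A}*_M\mathcal{T}^{\dagger})^{\dagger}=(\mathcal{R}^{\dagger}*_N\mathcal{A})^{\dagger}*_K\mathcal{S}*_L(\mathcal{A}*_M\mathcal{T}^{\dagger})^{\dagger}.$$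
   Context: $\mathbb{C}^{I_1\times\cdots\times I_N}$ denotes the set of complex tensors of order $N$ and dimension $I_1\times\cdots\times I_N$. For $\mathcal{A}\in\mathbb{C}^{I_1\times\cdots\times I_N\times K_1\times\cdots\times K_N}$ and $\mathcal{B}\in\mathbb{C}^{K_1\times\cdots\times K_N\times J_1\times\cdots\times J_M}$, the Einstein product $\mathcal{A}*_N\mathcal{B}$ is defined by $(\mathcal{A}*_N\mathcal{B})_{i_1\dots i_N j_1\dots j_M}=\sum_{k_1,\dots,k_N}a_{i_1\dots i_N k_1\dots k_N}b_{k_1\dots k_N j_1\dots j_M}$; it is associative. $\mathcal{A}^H$ denotes the conjugate transpose (swap the two groups of indices and conjugate entries). For $\mathcal{A}\in\mathbb{C}^{I_1\times\cdots\times I_N\times J_1\times\cdots\times J_M}$ the Moore–Penrose inverse $\mathcal{A}^{\dagger}$ is the unique $\mathcal{X}\in\mathbb{C}^{J_1\times\cdots\times J_M\times I_1\times\cdots\times I_N}$ with $\mathcal{A}*_M\mathcal{X}*_N\mathcal{A}=\mathcal{A}$, $\mathcal{X}*_N\mathcal{A}*_M\mathcal{X}=\mathcal{X}$, $(\mathcal{A}*_M\mathcal{X})^H=\mathcal{A}*_M\mathcal{X}$, $(\mathcal{X}*_N\mathcal{A})^H=\mathcal{X}*_N\mathcal{A}$. *)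

(* Defs.v *)
From HB Require Import structures.
From mathcomp Require Import all_boot all_order all_algebra.
From Stdlib Require Import ClassicalEpsilon.
Set Implicit Arguments. Unset Strict Implicit. Unset Printing Implicit Defensive.
Import Order.TTheory GRing.Theory Num.Theory.
Local Open Scope ring_scope.

(* Multi-indices for the dimension list d = [:: I_1; ...; I_N]:
   a multi-index is a function k |-> i_k with i_k < I_k. *)
Definition mindex (d : seq nat) : finType :=
  {dffun forall k : 'I_(size d), 'I_(nth 0%N d k)}.

Definition tensor (C : Type) (I J : seq nat) := mindex I -> mindex J -> C.

Section Tensors.
Variable C : numClosedFieldType.

Definition einstein (I K J : seq nat) (A : tensor C I K) (B : tensor C K J)
  : tensor C I J :=
  fun i j => \sum_(k : mindex K) A i k * B k j.

Definition ctrans (I J : seq nat) (A : tensor C I J) : tensor C J I :=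
  fun j i => (A i j)^*.

Definition is_MP (I J : seq nat) (A : tensor C I J) (X : tensor C J I) : Prop :=
  [/\ einstein (einstein A X) A = A,
      einstein (einstein X A) X = X,
      ctrans (einstein A X) = einstein A X &
      ctrans (einstein X A) = einstein X A].

Definition pinv (I J : seq nat) (A : tensor C I J) : tensor C J I :=
  epsilon (inhabits (fun _ _ => 0)) (fun X => is_MP A X).

End Tensors.

(* Main.v *)
Require Import Defs.
From HB Require Import structures.
From Stdlib Require Import FunctionalExtensionality ClassicalEpsilon.
From mathcomp Require Import all_boot all_order all_algebra.
Set Implicit Arguments. Unset Strict Implicit. Unset Printing Implicit Defensive.
Import Order.TTheory GRing.Theory Num.Theory Num.Def.
Local Open Scope ring_scope.

Section Mx.
Variable C : numClosedFieldType.

Definition adj m n (M : 'M[C]_(m, n)) : 'M[C]_(n, m) := (map_mx conjC M)^T.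

Lemma adjM m n p (A : 'M[C]_(m, n)) (B : 'M[C]_(n, p)) :
  adj (A *m B) = adj B *m adj A.
Proof. by rewrite /adj map_mxM trmx_mul. Qed.

Lemma adjK m n (A : 'M[C]_(m, n)) : adj (adj A) = A.
Proof. by apply/matrixP => i j; rewrite !mxE conjCK. Qed.

Lemma adj_inv n (A : 'M[C]_n) : adj (invmx A) = invmx (adj A).
Proof. by rewrite /adj map_invmx trmx_inv. Qed.

Lemma adj_rank m n (A : 'M[C]_(m, n)) : \rank (adj A) = \rank A.
Proof. by rewrite /adj mxrank_tr mxrank_map. Qed.

Lemma adj_pos n (w : 'rV[C]_n) : w *m adj w = 0 -> w = 0.
Proof.
move=> /matrixP /(_ 0 0); rewrite !mxE => H.
have H' : \sum_(j < n) `|w 0 j| ^+ 2 = 0.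
  by rewrite -[RHS]H; apply: eq_bigr => j _; rewrite !mxE normCK.
apply/matrixP => i j; rewrite (ord1 i) mxE.
have /psumr_eq0P := H'; move=> /(_ (fun j _ => exprn_ge0 2 (normr_ge0 _))) /(_ j isT).
by move/eqP; rewrite expf_eq0 /= normr_eq0 => /eqP.
Qed.

Lemma gram_unit k n (M : 'M[C]_(k, n)) : row_free M -> M *m adj M \in unitmx.
Proof.
move=> fM; rewrite -row_free_unit; apply: inj_row_free => v.
rewrite mulmxA => H.
have : (v *m M) *m adj (v *m M) = 0 by rewrite adjM mulmxA H mul0mx.
move/adj_pos => vM0.
by apply: (row_free_inj fM); rewrite vM0 mul0mx.
Qed.

Lemma mp_fact m r n (F : 'M[C]_(m, r)) (G : 'M[C]_(r, n)) :
  G *m adj G \in unitmx -> adj F *m F \in unitmx ->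
  let A := F *m G in exists X : 'M[C]_(n, m),
  [/\ A *m X *m A = A, X *m A *m X = X,
      adj (A *m X) = A *m X & adj (X *m A) = X *m A].
Proof.
move=> uG uF A.
set P := invmx (G *m adj G); set Q := invmx (adj F *m F).
have hP : adj P = P by rewrite /P adj_inv adjM adjK.
have hQ : adj Q = Q by rewrite /Q adj_inv adjM adjK.
have GP : G *m adj G *m P = 1%:M by rewrite mulmxV.
have QF : Q *m (adj F *m F) = 1%:M by rewrite mulVmx.
have GP' : forall k (Z : 'M_(k, r)), Z *m G *m adj G *m P = Z.
  by move=> k Z; rewrite -(mulmxA (Z *m G)) -mulmxA (mulmxA G) GP mulmx1.
have QF' : forall k (Z : 'M_(k, r)), Z *m Q *m adj F *m F = Z.
  by move=> k Z; rewrite -(mulmxA (Z *m Q)) -mulmxA QF mulmx1.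
exists (adj G *m P *m Q *m adj F).
have AX : A *m (adj G *m P *m Q *m adj F) = F *m Q *m adj F.
  by rewrite /A !mulmxA GP'.
have XA : (adj G *m P *m Q *m adj F) *m A = adj G *m P *m G.
  by rewrite /A !mulmxA QF'.
rewrite AX XA; split.
- by rewrite /A !mulmxA QF'.
- by rewrite !mulmxA GP'.
- by rewrite !adjM adjK hQ mulmxA.
- by rewrite !adjM adjK hP mulmxA.
Qed.

Lemma mp_exists m n (A : 'M[C]_(m, n)) : exists X : 'M[C]_(n, m),
  [/\ A *m X *m A = A, X *m A *m X = X,
      adj (A *m X) = A *m X & adj (X *m A) = X *m A].
Proof.
have uG : row_base A *m adj (row_base A) \in unitmx.
  by apply: gram_unit; exact: row_base_free.
have uF : adj (col_base A) *m adj (adj (col_base A)) \in unitmx.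
  apply: gram_unit; rewrite /row_free adj_rank.
  by have := col_base_full A; rewrite /row_full.
rewrite adjK in uF.
by have := mp_fact uG uF; rewrite /= mulmx_base.
Qed.
End Mx.

Section Tens.
Variable C : numClosedFieldType.

Lemma einsteinA (I K L J : seq nat) (A : tensor C I K) (B : tensor C K L)
  (D : tensor C L J) : einstein (einstein A B) D = einstein A (einstein B D).
Proof.
apply: functional_extensionality => i; apply: functional_extensionality => j.
rewrite /einstein.
under eq_bigr do rewrite big_distrl /=.
rewrite exchange_big /=; apply: eq_bigr => k _.
rewrite big_distrr /=; apply: eq_bigr => l _.
by rewrite mulrA.
Qed.

Lemma ctrans_einstein (I K J : seq nat) (A : tensor C I K) (B : tensor C K J) :
  ctrans (einstein A B) = einstein (ctrans B) (ctrans A).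
Proof.
apply: functional_extensionality => i; apply: functional_extensionality => j.
rewrite /ctrans /einstein rmorph_sum; apply: eq_bigr => k _.
by rewrite rmorphM mulrC.
Qed.

Lemma ctransK (I J : seq nat) (A : tensor C I J) : ctrans (ctrans A) = A.
Proof.
apply: functional_extensionality => i; apply: functional_extensionality => j.
by rewrite /ctrans conjCK.
Qed.

Definition toM (I J : seq nat) (A : tensor C I J)
  : 'M[C]_(#|{: mindex I}|, #|{: mindex J}|) :=
  \matrix_(i, j) A (enum_val i) (enum_val j).

Definition ofM (I J : seq nat) (M : 'M[C]_(#|{: mindex I}|, #|{: mindex J}|))
  : tensor C I J := fun i j => M (enum_rank i) (enum_rank j).

Lemma ofMK I J (A : tensor C I J) : ofM (toM A) = A.
Proof.
apply: functional_extensionality => i; apply: functional_extensionality => j.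
by rewrite /ofM /toM mxE !enum_rankK.
Qed.

Lemma toMK I J (M : 'M[C]_(#|{: mindex I}|, #|{: mindex J}|)) : toM (ofM M) = M.
Proof. by apply/matrixP => i j; rewrite /ofM /toM mxE !enum_valK. Qed.

Lemma toM_inj I J (A B : tensor C I J) : toM A = toM B -> A = B.
Proof. by move=> h; rewrite -(ofMK A) h ofMK. Qed.

Lemma toM_einstein (I K J : seq nat) (A : tensor C I K) (B : tensor C K J) :
  toM (einstein A B) = toM A *m toM B.
Proof.
apply/matrixP => i j; rewrite /toM !mxE /einstein.
rewrite (reindex (@enum_val _ (mem {: mindex K}))) /=; last first.
  by exists enum_rank => x _; rewrite ?enum_valK ?enum_rankK.
by apply: eq_bigr => k _; rewrite !mxE.
Qed.

Lemma toM_ctrans (I J : seq nat) (A : tensor C I J) :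
  toM (ctrans A) = adj (toM A).
Proof. by apply/matrixP => i j; rewrite /toM /adj !mxE. Qed.

Lemma MP_exists (I J : seq nat) (A : tensor C I J) : exists X, is_MP A X.
Proof.
have [X [h1 h2 h3 h4]] := mp_exists (toM A).
exists (ofM X); split; apply: toM_inj;
  by rewrite ?toM_ctrans !toM_einstein ?toM_ctrans toMK.
Qed.

Lemma pinvP (I J : seq nat) (A : tensor C I J) : is_MP A (pinv A).
Proof.
rewrite /pinv; apply: epsilon_spec; exact: MP_exists.
Qed.
End Tens.
Section U.
Variable C : numClosedFieldType.
Local Notation "a ** b" := (einstein a b) (at level 40, left associativity).

Lemma MP_unique (I J : seq nat) (A : tensor C I J) X Y :
  is_MP A X -> is_MP A Y -> X = Y.
Proof.
move=> [x1 x2 x3 x4] [y1 y2 y3 y4].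
have cA : ctrans A = ctrans A ** (A ** Y) by rewrite -{1}y1 ctrans_einstein y3.
have cA' : ctrans A = (Y ** A) ** ctrans A.
  by rewrite -{1}y1 einsteinA ctrans_einstein y4.
have eAX : A ** X = A ** Y.
  rewrite -x3 ctrans_einstein cA -einsteinA -ctrans_einstein x3.
  rewrite -einsteinA; congr (einstein _ Y); exact: x1.
have eXA : X ** A = Y ** A.
  rewrite -x4 ctrans_einstein cA' einsteinA -ctrans_einstein x4.
  by rewrite einsteinA -(einsteinA A X A) x1.
by rewrite -x2 einsteinA eAX -einsteinA eXA y2.
Qed.

Lemma MP1 (I J K : seq nat) (A : tensor C I J) X : is_MP A X ->
  forall (Z : tensor C J K), A ** (X ** (A ** Z)) = A ** Z.
Proof. by case=> x1 _ _ _ Z; rewrite -!einsteinA x1. Qed.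
Lemma MP2 (I J K : seq nat) (A : tensor C I J) X : is_MP A X ->
  forall (Z : tensor C I K), X ** (A ** (X ** Z)) = X ** Z.
Proof. by case=> _ x2 _ _ Z; rewrite -!einsteinA x2. Qed.

Lemma main_aux (I H G J : seq nat)
  (R : tensor C I H) (S : tensor C H G) (T : tensor C G J) :
  let A := einstein (einstein R S) T in
  pinv A =
    einstein (einstein (einstein (einstein
      (pinv (einstein (pinv R) A)) (pinv R)) A) (pinv T))
      (pinv (einstein A (pinv T)))
  /\
  pinv A =
    einstein (einstein (pinv (einstein (pinv R) A)) S)
      (pinv (einstein A (pinv T))).
Proof.
move=> A.
set Rd := pinv R; set Td := pinv T.
set P := Rd ** A; set Q := A ** Td.
set Pd := pinv P; set Qd := pinv Q.
have hR : is_MP R Rd := pinvP R. have hT : is_MP T Td := pinvP T.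
have hP : is_MP P Pd := pinvP P. have hQ : is_MP Q Qd := pinvP Q.
have hAA : is_MP A (pinv A) := pinvP A.
move: (pinv A) hAA => Ad hAA.
have dA : A = R ** S ** T by [].
have dP : P = Rd ** A by [].
have dQ : Q = A ** Td by [].
clearbody Pd Qd P Q Rd Td A.
have hA : R ** P = A.
  by rewrite dP dA !einsteinA (MP1 hR).
have hQT : Q ** T = A.
  have [t1 _ _ _] := hT.
  by rewrite dQ dA !einsteinA -(einsteinA T) t1.
set X := Pd ** Rd ** A ** Td ** Qd.
have eX : X = Pd ** (P ** (Td ** Qd)).
  by rewrite /X dP !einsteinA.
have eX2 : X = Pd ** (Rd ** (Q ** Qd)).
  by rewrite /X dQ !einsteinA.
clearbody X.
have AX : A ** X = Q ** Qd.
  by rewrite eX -{1}hA !einsteinA (MP1 hP) -(einsteinA R P) hA -einsteinA dQ.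
have XA : X ** A = Pd ** P.
  by rewrite eX2 -hQT !einsteinA (MP1 hQ) hQT dP.
have MPX : is_MP A X.
  have [p1 p2 p3 p4] := hP; have [q1 q2 q3 q4] := hQ.
  split.
  - by rewrite AX -hQT -einsteinA q1 hQT.
  - by rewrite XA {1}eX einsteinA (MP2 hP) -eX.
  - by rewrite AX q3.
  - by rewrite XA p4.
have -> : Ad = X := MP_unique hAA MPX.
split => //.
have hPd : Pd = Pd ** (Rd ** R).
  have [r1 r2 r3 r4] := hR; have [p1 p2 p3 p4] := hP.
  have eP : P = Rd ** R ** P by rewrite einsteinA dP (MP2 hR).
  have cP : ctrans P = ctrans P ** (Rd ** R).
    by rewrite {1}eP ctrans_einstein r4.
  rewrite -{1}p2 einsteinA -p3 ctrans_einstein cP -(einsteinA (ctrans Pd)).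
  by rewrite -ctrans_einstein p3 -einsteinA -(einsteinA Pd P Pd) p2.
have hQd : Qd = T ** (Td ** Qd).
  have [t1 t2 t3 t4] := hT; have [q1 q2 q3 q4] := hQ.
  have eQ : Q = Q ** (T ** Td) by rewrite -einsteinA hQT dQ.
  have cQ : ctrans Q = (T ** Td) ** ctrans Q.
    by rewrite {1}eQ ctrans_einstein t3.
  rewrite -{1}q2 -q4 ctrans_einstein cQ (einsteinA (T ** Td)) -ctrans_einstein q4.
  by rewrite !einsteinA -(einsteinA Qd Q Qd) q2.
by rewrite eX2 [in RHS]hPd [in RHS]hQd dQ dA !einsteinA.
Qed.
End U.

Theorem theorem3p5 (C : numClosedFieldType) (I H G J : seq nat)
  (R : tensor C I H) (S : tensor C H G) (T : tensor C G J) :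
  let A := einstein (einstein R S) T in
  pinv A =
    einstein (einstein (einstein (einstein
      (pinv (einstein (pinv R) A)) (pinv R)) A) (pinv T))
      (pinv (einstein A (pinv T)))
  /\
  pinv A =
    einstein (einstein (pinv (einstein (pinv R) A)) S)
      (pinv (einstein A (pinv T))).
Proof. exact: main_aux. Qed.
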